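(* Let $s\ge1$ be an integer and let $(G,Z)$ be a dyadic plantation. Then there exists $X\subseteq Z$ with $|X|\le 2\phi(s)$ such that exploding the vertices of $X$ yields a dyadic plantation with at most $2|Z|$ binary vertices.
   Context: Graphs are finite and simple. Two subgraphs are anticomplete if their vertex sets are disjoint and no edge joins them. $G$ is $s\mathcal{O}$-free if no $s$ cycles of $G$ are pairwise vertex-disjoint and pairwise anticomplete. $Z\subseteq V(G)$ is cycle-hitting if every cycle of $G$ has a vertex in $Z$. A plantation is a pair $(G,Z)$ with $G$ an $s\mathcal{O}$-free graph and $Z$ cycle-hitting. $(G,Z)$ is dyadic if $Z$ is stable and every vertex of $V(G)\setminus Z$ has at most two neighbours in $Z$; a vertex of $V(G)\setminus Z$ is binary if it has exactly two neighbours in $Z$. Exploding $v\in Z$ produces $(G',Z\setminus\{v\})$, where $G'$ is obtained from $G$ by deleting $v$ and all its neighbours in $V(G)\setminus Z$; exploding a set means exploding its vertices one at a time. $\phi(s)\ge0$ denotes a number (which exists by the Erdős–Pósa theorem) such that every multigraph in which no $s$ cycles are pairwise vertex-disjoint has a set of at most $\phi(s)$ vertices meeting every cycle; in multigraphs, loops and pairs of parallel edges count as cycles. *)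

(* Defs.v *)
From mathcomp Require Import all_boot.
Set Implicit Arguments. Unset Strict Implicit. Unset Printing Implicit Defensive.

(* A multigraph: vertex type V, edge type E, each edge with two (possibly equal) ends. *)

Definition joins (V E : finType) (ends : E -> V * V) (f : E) (a b : V) : bool :=
  (ends f == (a, b)) || (ends f == (b, a)).

(* A cycle of a multigraph: distinct vertices v_0..v_{k-1} (k >= 1) and distinct
   edges f_0..f_{k-1}, f_i joining v_i and v_{(i+1) mod k}.  k = 1 is a loop,
   k = 2 a pair of parallel edges. *)
Definition mcycle (V E : finType) (ends : E -> V * V) (vs : seq V) (es : seq E) : Prop :=
  [/\ 0 < size vs, size es = size vs, uniq vs, uniq es &
      forall i, i < size vs ->
        exists (v0 : V) (f0 : E),
          joins ends (nth f0 es i) (nth v0 vs i) (nth v0 vs ((i.+1) %% size vs))].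

Definition erdos_posa_bound (phi : nat -> nat) : Prop :=
  forall (s : nat) (V E : finType) (ends : E -> V * V),
    ~ (exists C : 'I_s -> seq V * seq E,
          (forall i, mcycle ends (C i).1 (C i).2) /\
          (forall i j, i != j -> forall v, v \in (C i).1 -> v \notin (C j).1)) ->
    exists X : {set V}, #|X| <= phi s /\
      forall vs es, mcycle ends vs es -> has (fun v => v \in X) vs.

(* A finite simple graph: a symmetric irreflexive relation e on a finType T;
   we work with induced subgraphs on a vertex set W : {set T}. *)
Definition simple_graph (T : finType) (e : rel T) : Prop := symmetric e /\ irreflexive e.

Definition is_cycle (T : finType) (e : rel T) (W : {set T}) (c : seq T) : Prop :=
  [/\ 2 < size c, uniq c, {subset c <= W} & cycle e c].

Definition sO_free (T : finType) (e : rel T) (s : nat) (W : {set T}) : Prop :=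
  ~ (exists C : 'I_s -> seq T,
        (forall i, is_cycle e W (C i)) /\
        (forall i j, i != j -> forall u v, u \in C i -> v \in C j ->
              u != v /\ ~~ e u v)).

Definition cycle_hitting (T : finType) (e : rel T) (W Z : {set T}) : Prop :=
  forall c, is_cycle e W c -> has (fun v => v \in Z) c.

Definition plantation (T : finType) (e : rel T) (s : nat) (W Z : {set T}) : Prop :=
  [/\ Z \subset W, sO_free e s W & cycle_hitting e W Z].

Definition nbrs_in (T : finType) (e : rel T) (Z : {set T}) (v : T) : {set T} :=
  [set u in Z | e v u].

Definition dyadic (T : finType) (e : rel T) (W Z : {set T}) : Prop :=
  (forall u v, u \in Z -> v \in Z -> ~~ e u v) /\
  (forall v, v \in W :\: Z -> #|nbrs_in e Z v| <= 2).

Definition binary_vertices (T : finType) (e : rel T) (W Z : {set T}) : {set T} :=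
  [set v in W :\: Z | #|nbrs_in e Z v| == 2].

Definition explode1 (T : finType) (e : rel T) (p : {set T} * {set T}) (v : T)
  : {set T} * {set T} :=
  let: (W, Z) := p in
  ((W :\ v) :\: [set u in W :\: Z | e v u], Z :\ v).

Definition explode (T : finType) (e : rel T) (W Z X : {set T}) : {set T} * {set T} :=
  foldl (explode1 e) (W, Z) (enum X).

(* Main.v *)
Require Import Defs.
From mathcomp Require Import all_boot zify.
Set Implicit Arguments. Unset Strict Implicit. Unset Printing Implicit Defensive.

Section Multi.
Variables (V E : finType) (ends : E -> V * V).

Definition incident (f : E) (v : V) := (v == (ends f).1) || (v == (ends f).2).

Lemma joins_sym f a b : joins ends f a b = joins ends f b a.
Proof. by rewrite /joins orbC. Qed.

Lemma joins_inc f a b x : joins ends f a b -> incident f x -> x = a \/ x = b.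
Proof.
rewrite /joins /incident => /orP [] /eqP -> /orP [] /eqP -> /=; tauto.
Qed.

Lemma joins_inc1 f a b : joins ends f a b -> incident f a.
Proof. by rewrite /joins /incident => /orP [] /eqP -> /=; rewrite eqxx ?orbT. Qed.

Lemma joins_ends f a b : joins ends f a b ->
  (a == (ends f).1) && (b == (ends f).2) || (a == (ends f).2) && (b == (ends f).1).
Proof. by rewrite /joins => /orP [] /eqP -> /=; rewrite !eqxx ?orbT. Qed.

Definition trail (A : {set V}) (F : {set E}) (vs : seq V) (es : seq E) :=
  [/\ size vs = (size es).+1, uniq vs, uniq es, all (mem F) es &
      (all (mem A) vs /\ forall v0 f0 i, i < size es -> joins ends (nth f0 es i) (nth v0 vs i) (nth v0 vs i.+1))].

Lemma mindeg (A : {set V}) (F : {set E})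
  (endsA : forall f, f \in F -> ((ends f).1 \in A) && ((ends f).2 \in A))
  (nocyc : forall vs es, mcycle ends vs es -> all (mem F) es -> False)
  (x0 : V) (x0A : x0 \in A)
  (deg : forall v, v \in A -> 1 < #|[set f in F | incident f v]|) : False.
Proof.
have step : forall n, exists vs es, trail A F vs es /\ size es = n.
  elim=> [|n [vs [es [[Hs Hu Hue HF [HA Hj]] Hn]]]].
    exists [:: x0], [::]; split=> //; split=> //=; by rewrite ?x0A.
  case: vs Hs Hu HA Hj => [//|x vs'] Hs Hu HA Hj.
  have xA : x \in A by move: HA => /= /andP [].
  have /card_gt1P [f1 [f2 [f1F f2F f12]]] := deg x xA.
  move: f1F f2F; rewrite !inE => /andP [f1F f1x] /andP [f2F f2x].
  pose f := if ohead es == Some f1 then f2 else f1.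
  have fF : f \in F by rewrite /f; case: ifP.
  have fx : incident f x by rewrite /f; case: ifP.
  have fhead : forall f0, 0 < size es -> nth f0 es 0 != f.
    move=> f0 ne; rewrite /f.
    have -> : ohead es = Some (nth f0 es 0) by case: (es) ne.
    case: ifP => /eqP; first by case=> ->.
    by move=> ne'; apply/eqP => E1; apply: ne'; rewrite E1.
  have fnes : f \notin es.
    apply/negP => /(nthP f) [i ilt ei].
    case: i ilt ei => [|i] ilt ei; first by move: (fhead f (leq_ltn_trans (leq0n _) ilt)); rewrite ei eqxx.
    have := Hj x f i.+1 ilt; rewrite ei => /joins_inc /(_ fx) [] /= xe.
    - have : uniq (x :: vs') := Hu.
      rewrite /= => /andP [] /negP []; rewrite {1}xe; apply: mem_nth.
      by move: Hs => /= [] ->; apply: ltnW.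
    - have : uniq (x :: vs') := Hu.
      rewrite /= => /andP [] /negP []; rewrite {1}xe; apply: mem_nth.
      by move: Hs => /= [] ->.
  pose y := if (ends f).1 == x then (ends f).2 else (ends f).1.
  have jyx : joins ends f y x.
    rewrite /y /joins; move: fx; rewrite /incident; case: (ends f) => a b /=.
    case: (a =P x) => [->|ne] /=; first by rewrite !eqxx ?orbT.
    by case/orP => /eqP xe; [case: ne | rewrite xe eqxx].
  have yA : y \in A.
    by rewrite /y; case: ifP => _; move: (endsA _ fF) => /andP [].
  case yin : (y \in x :: vs'); last first.
    exists [:: y, x & vs'], (f :: es); split; last by rewrite /= Hn.
    split=> //=.
    - by move: Hs => /= [->].
    - by rewrite yin.
    - by rewrite fnes.
    - by rewrite fF.
    split; first by rewrite yA.
    move=> v0 f0 [|i] /=; first by rewrite ltnS => _; rewrite jyx.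
    by rewrite ltnS; apply: Hj.
  exfalso.
  pose j := index y (x :: vs').
  have jlt : j < size (x :: vs') by rewrite index_mem.
  apply: (nocyc (take j.+1 (x :: vs')) (rcons (take j es) f)).
    have sj : size (take j es) = j.
      by rewrite size_takel // -ltnS -Hs.
    have sj1 : size (take j.+1 (x :: vs')) = j.+1 by rewrite size_takel.
    split.
    - by rewrite sj1.
    - by rewrite size_rcons sj sj1.
    - exact: take_uniq.
    - by rewrite rcons_uniq (take_uniq _ Hue) andbT; apply: contra fnes; apply: mem_take.
    - move=> i; rewrite sj1 => ilt; exists x, f.
      rewrite nth_rcons sj.
      move: ilt; rewrite ltnS leq_eqVlt => /orP [/eqP ->|ilt].
        by rewrite ltnn eqxx modnn !nth_take // nth_index.
      rewrite ilt modn_small ?ltnS // !nth_take ?ltnS ?(ltnW ilt) //.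
      apply: Hj; apply: (leq_trans ilt); by rewrite -ltnS -Hs.
  rewrite all_rcons; apply/andP; split; first exact: fF.
  by apply/allP => g /mem_take; move/allP: HF; apply.
have [vs [es [[_ _ Hue _ _] Hn]]] := step #|E|.+1.
by move: (max_card (mem es)); rewrite (card_uniqP Hue) Hn ltnn.
Qed.

Lemma forest_bound n : forall (A : {set V}) (F : {set E}), #|A| <= n ->
  (forall f, f \in F -> ((ends f).1 \in A) && ((ends f).2 \in A)) ->
  (forall vs es, mcycle ends vs es -> all (mem F) es -> False) ->
  #|F| <= #|A|.
Proof.
elim: n => [|n IH] A F An endsA nocyc.
  have A0 : A = set0 by apply/eqP; rewrite -cards_eq0 -leqn0.
  case: (set_0Vmem F) => [->|[f fF]]; first by rewrite cards0.
  by move: (endsA f fF); rewrite A0 inE.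
case: (boolP [exists v in A, #|[set f in F | incident f v]| <= 1]).
  case/exists_inP => v vA degv.
  pose Fv := [set f in F | incident f v].
  have HA : #|A| = #|A :\ v|.+1 by rewrite (cardsD1 v A) vA.
  have IH' := IH (A :\ v) (F :\: Fv).
  have le1 : #|F :\: Fv| <= #|A :\ v|.
    apply: IH'.
    - by rewrite -ltnS -HA.
    - move=> f; rewrite !inE => /andP [nfv fF].
      have notinc : ~~ incident f v by move: nfv; rewrite fF.
      move: (endsA f fF) => /andP [e1 e2].
      rewrite e1 e2 !andbT; move: notinc; rewrite /incident negb_or.
      by case/andP => n1 n2; rewrite !(eq_sym _ v) n1 n2.
    - move=> vs es C allF; apply: (nocyc vs es C).
      by apply/allP => f /(allP allF); rewrite /= inE => /andP [].
  rewrite -(cardsID Fv F) HA.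
  have : #|F :&: Fv| <= 1 by apply: leq_trans degv; apply: subset_leq_card; apply: subsetIr.
  by move=> h; rewrite addnC -addn1; apply: leq_add.
rewrite negb_exists => /forallP deg.
case: (set_0Vmem A) => [A0|[x0 x0A]].
  case: (set_0Vmem F) => [->|[f fF]]; first by rewrite cards0.
  by move: (endsA f fF); rewrite A0 inE.
exfalso; apply: (mindeg endsA nocyc x0A) => v vA.
by move: (deg v); rewrite vA /= ltnNge.
Qed.
End Multi.

Section Simple.
Variables (T : finType) (e : rel T) (esym : symmetric e) (eirr : irreflexive e).

Lemma cycle_nth (vs : seq T) x0 : 0 < size vs ->
  (forall i, i < size vs -> e (nth x0 vs i) (nth x0 vs (i.+1 %% size vs))) -> cycle e vs.
Proof.
case: vs => [//|x p] _ H; rewrite /=.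
apply/(pathP x0) => i; rewrite size_rcons ltnS => ilt.
have := H i; rewrite /= ltnS => /(_ ilt).
rewrite -rcons_cons nth_rcons /= ltnS ilt nth_rcons.
move: ilt; rewrite leq_eqVlt => /orP [/eqP ->|ilt].
  by rewrite modnn ltnn eqxx.
by rewrite ilt modn_small.
Qed.

Definition ordE (a b : T) := if enum_rank a < enum_rank b then (a, b) else (b, a).

Definition Fset (S : {set T}) := [set p : T * T | [&& p.1 \in S, p.2 \in S, e p.1 p.2 & enum_rank p.1 < enum_rank p.2]].

Lemma jF (S : {set T}) p a b : p \in Fset S -> joins id p a b -> [&& a \in S, b \in S & e a b].
Proof.
rewrite inE /joins => /and4P [h1 h2 h3 _] /orP [] /eqP E; rewrite E /= in h1 h2 h3.
  by rewrite h1 h2 h3.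
by rewrite h1 h2 esym h3.
Qed.

Lemma jF_uniq (S : {set T}) p q a b : p \in Fset S -> q \in Fset S -> joins id p a b -> joins id q a b -> p = q.
Proof.
rewrite !inE /joins => /and4P [_ _ _ hp] /and4P [_ _ _ hq].
move=> /orP [] /eqP Ep /orP [] /eqP Eq; rewrite ?Ep ?Eq //=; rewrite Ep Eq /= in hp hq.
  by move: (ltn_trans hp hq); rewrite ltnn.
by move: (ltn_trans hp hq); rewrite ltnn.
Qed.

Lemma ordE_F (S : {set T}) a b : a \in S -> b \in S -> e a b -> ordE a b \in Fset S.
Proof.
move=> aS bS eab; rewrite /ordE inE; case: ifP => /= h; first by rewrite aS bS eab h.
rewrite aS bS esym eab /=.
have : enum_rank a != enum_rank b.
  apply/negP => /eqP /enum_rank_inj E; by move: eab; rewrite E eirr.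
by rewrite neq_ltn h.
Qed.

Lemma ordE_inc a b : incident id (ordE a b) a.
Proof. by rewrite /ordE /incident; case: ifP => _ /=; rewrite eqxx ?orbT. Qed.

Lemma ordE_inj v u1 u2 : e v u1 -> e v u2 -> ordE v u1 = ordE v u2 -> u1 = u2.
Proof.
rewrite /ordE => h1 h2; case: ifP => _; case: ifP => _ //; case=> //.
- by move=> E _; move: h2; rewrite -E eirr.
- by move=> E _; move: h1; rewrite E eirr.
Qed.

Lemma leaf (S : {set T}) : (forall c, is_cycle e S c -> False) ->
  forall x, x \in S -> exists2 v, v \in S & #|[set u in S | e v u]| <= 1.
Proof.
move=> acyc x xS.
case: (boolP [exists v in S, #|[set u in S | e v u]| <= 1]) => [/exists_inP [v vS h]|]; first by exists v.
rewrite negb_exists => /forallP deg; exfalso.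
apply: (@mindeg T (T * T)%type id S (Fset S) _ _ x xS).
- by move=> p; rewrite inE => /and4P [-> -> _ _].
- move=> vs es [Hpos Hsz Hu Hue Hj] allF.
  have Fi : forall i, i < size vs -> nth (x, x) es i \in Fset S.
    by move=> i ilt; apply: (allP allF); apply: mem_nth; rewrite Hsz.
  have key : forall i, i < size vs -> joins id (nth (x, x) es i) (nth x vs i) (nth x vs (i.+1 %% size vs)).
    move=> i ilt; have [v0 [f0 J]] := Hj i ilt.
    have ilt' : i.+1 %% size vs < size vs by rewrite ltn_pmod.
    by rewrite (set_nth_default x _ ilt) (set_nth_default x _ ilt') (set_nth_default (x, x) _ (ltac:(by rewrite Hsz) : i < size es)) in J.
  have key2 : forall i, i < size vs -> [&& nth x vs i \in S, nth x vs (i.+1 %% size vs) \in S & e (nth x vs i) (nth x vs (i.+1 %% size vs))].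
    by move=> i ilt; apply: (jF (Fi i ilt) (key i ilt)).
  apply: (acyc vs); split => //.
  + case Hk: (size vs) => [|[|[|k]]] //; first by rewrite Hk in Hpos.
      have := key2 0; rewrite Hk => /(_ isT) /and3P [_ _]; by rewrite modnn eirr.
    have J0 := key 0; have J1 := key 1; rewrite Hk /= in J0 J1.
    have J0' := J0 isT; have J1' := J1 isT; rewrite modnn joins_sym in J1'.
    rewrite /= (modn_small (isT : 1 < 2)) in J0'.
    have E := jF_uniq (Fi 0 (ltac:(by rewrite Hk))) (Fi 1 (ltac:(by rewrite Hk))) J0' J1'.
    by move: E => /eqP; rewrite nth_uniq // Hsz Hk.
  + move=> v /(nthP x) [i ilt <-]; by case/and3P: (key2 i ilt).
  + by apply: (@cycle_nth vs x Hpos) => i ilt; case/and3P: (key2 i ilt).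
- move=> v vS; move: (deg v); rewrite vS /= -ltnNge => /card_gt1P [u1 [u2 [u1N u2N u12]]].
  move: u1N u2N; rewrite !inE => /andP [u1S e1] /andP [u2S e2].
  apply/card_gt1P; exists (ordE v u1), (ordE v u2); split.
  - by rewrite inE ordE_F ?ordE_inc.
  - by rewrite inE ordE_F ?ordE_inc.
  by apply/negP => /eqP /(ordE_inj e1 e2) /eqP; apply/negP.
Qed.

Lemma colour n : forall S : {set T}, #|S| <= n -> (forall c, is_cycle e S c -> False) ->
  exists col : T -> bool, forall u v, u \in S -> v \in S -> e u v -> col u != col v.
Proof.
elim: n => [|n IH] S Sn acyc.
  have S0 : S = set0 by apply/eqP; rewrite -cards_eq0 -leqn0.
  by exists xpred0 => u v; rewrite S0 inE.
case: (set_0Vmem S) => [S0|[x xS]]; first by exists xpred0 => u v; rewrite S0 inE.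
have [v vS degv] := leaf acyc xS.
have [col Hcol] : exists col : T -> bool, forall u w, u \in S :\ v -> w \in S :\ v -> e u w -> col u != col w.
  apply: IH.
    by move: Sn; rewrite (cardsD1 v S) vS.
  move=> c [h1 h2 h3 h4]; apply: (acyc c); split=> // y /h3; by rewrite inE => /andP [_ ->].
pose col' := fun y => if y == v then (if [pick u in S | e v u] is Some u then ~~ col u else true) else col y.
have key : forall w, w \in S -> e v w -> col' v != col' w.
  move=> w wS evw.
  have wv : w != v by apply/eqP => E; move: evw; rewrite E eirr.
  rewrite /col' eqxx (negbTE wv).
  case: pickP => [u0 /andP [u0S evu0]|none]; last by move: (none w); rewrite wS evw.
  have : u0 = w.
    move/card_le1_eqP: degv => h.
    by apply: (h w u0); rewrite inE ?u0S ?evu0 ?wS ?evw.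
  by move=> ->; case: (col w).
exists col' => u w uS wS euw.
case: (u =P v) => [Eu|nu].
  by rewrite Eu; apply: key => //; rewrite -Eu.
case: (w =P v) => [Ew|nw].
  rewrite eq_sym Ew; apply: key => //; by rewrite esym -Ew.
rewrite /col' (introF eqP nu) (introF eqP nw); apply: Hcol => //; rewrite !inE ?uS ?wS andbT; apply/eqP; assumption.
Qed.
End Simple.

Section Main.
Variables (T : finType) (e : rel T) (esy : symmetric e) (eirr : irreflexive e).
Variables (Z : {set T}) (Zst : forall u v, u \in Z -> v \in Z -> ~~ e u v).

Definition BB := binary_vertices e [set: T] Z.

Definition ends2 (b : T) : T * T :=
  let l := enum (nbrs_in e Z b) in (nth b l 0, nth b l 1).

Lemma BB_notZ b : b \in BB -> b \notin Z.
Proof. by rewrite inE !inE => /andP [] /andP []. Qed.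

Lemma ends2_props b : b \in BB ->
  [/\ (ends2 b).1 \in Z, (ends2 b).2 \in Z, e b (ends2 b).1, e b (ends2 b).2 &
   ((ends2 b).1 != (ends2 b).2) /\
   forall z, z \in Z -> e b z -> z = (ends2 b).1 \/ z = (ends2 b).2].
Proof.
rewrite inE => /andP [_ /eqP c2].
have U := enum_uniq (nbrs_in e Z b).
have M := mem_enum (nbrs_in e Z b).
rewrite cardE in c2; rewrite /ends2.
move: U M c2; case: (enum _) => [|a [|c [|]]] //= U M _.
have Ma := M a; have Mc := M c.
rewrite /nbrs_in !inE !eqxx ?orbT /= in Ma Mc.
move: Ma Mc => /esym /andP [aZ eba] /esym /andP [cZ ebc].
split=> //; split; first by move: U; rewrite inE andbT.
move=> z zZ ebz; have := M z; rewrite /nbrs_in !inE zZ ebz /= => /orP [] /eqP ->; tauto.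
Qed.

Variables (Bc : {set T}) (BcB : Bc \subset BB) (Bcst : forall u v, u \in Bc -> v \in Bc -> ~~ e u v).

Definition Esig := {b : T | b \in Bc}.
Definition endsE (f : Esig) : T * T := ends2 (val f).

Lemma valB (f : Esig) : val f \in BB.
Proof. exact: (subsetP BcB _ (valP f)). Qed.

Lemma joinsE f a b : joins endsE f a b ->
  [/\ a \in Z, b \in Z, e (val f) a, e (val f) b &
   forall z, z \in Z -> e (val f) z -> z = a \/ z = b].
Proof.
move=> J; have [h1 h2 h3 h4 [h5 h6]] := ends2_props (valB f).
move: J; rewrite /joins /endsE => /orP [] /eqP E; rewrite E /= in h1 h2 h3 h4 h6; split=> // z zZ ez;
  have := h6 z zZ ez; tauto.
Qed.

Lemma mc_key vs es t0 : mcycle endsE vs es -> forall i, i < size vs ->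
  exists f, [/\ f \in es, val f = nth t0 (map val es) i &
                joins endsE f (nth t0 vs i) (nth t0 vs (i.+1 %% size vs))].
Proof.
move=> [Hpos Hsz Hu Hue Hj] i ilt.
have [v0 [f0 J]] := Hj i ilt.
have ilt' : i.+1 %% size vs < size vs by rewrite ltn_pmod.
have iltes : i < size es by rewrite Hsz.
exists (nth f0 es i); split.
- exact: mem_nth.
- by rewrite (nth_map f0).
- by rewrite (set_nth_default t0 _ ilt) (set_nth_default t0 _ ilt') in J.
Qed.

Lemma mc_Z vs es v : mcycle endsE vs es -> v \in vs -> v \in Z.
Proof.
move=> mc /(nthP v) [i ilt <-].
have [f [_ _ J]] := mc_key v mc ilt.
by case: (joinsE J).
Qed.

Lemma mc_nbr vs es f z : mcycle endsE vs es -> f \in es -> z \in Z -> e (val f) z -> z \in vs.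
Proof.
move=> mc /(nthP f) [i ilt fE] zZ ez.
have mc' := mc; case: mc' => [Hpos Hsz Hu Hue Hj].
rewrite Hsz in ilt.
have [v0 [f0 J]] := Hj i ilt.
rewrite (set_nth_default f) ?Hsz // fE in J.
have [_ _ _ _ h] := joinsE J.
case: (h z zZ ez) => ->; apply: mem_nth => //; by rewrite ltn_pmod.
Qed.

Lemma mc_size2 vs es : mcycle endsE vs es -> 1 < size vs.
Proof.
move=> mc; have mc' := mc; case: mc' => [Hpos _ _ _ _].
case Hk: (size vs) => [|[|k]] //; first by rewrite Hk in Hpos.
case: vs Hk mc Hpos => [//|t0 vs'] Hk mc _.
have [f [_ _ J]] := mc_key t0 mc (ltac:(by rewrite Hk) : 0 < size (t0 :: vs')).
rewrite Hk modnn in J.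
have [_ _ _ _ [ne _]] := ends2_props (valB f).
by move: J ne; rewrite /joins /endsE => /orP [] /eqP -> /=; rewrite eqxx.
Qed.

Lemma dbl_lt i k : i.*2 < k.*2 -> i < k.
Proof. by rewrite ltn_double. Qed.
Lemma dbl_lt1 i k : i.*2.+1 < k.*2 -> i < k.
Proof. by move=> h; rewrite -ltn_double; exact: ltn_trans (ltnSn _) h. Qed.

Lemma dbl_S i k : i < k -> i.*2.+1 < k.*2.
Proof. by move=> h; rewrite -doubleS leq_double. Qed.

Definition toG (t0 : T) (vs : seq T) (es : seq Esig) :=
  mkseq (fun j => if odd j then nth t0 (map val es) j./2 else nth t0 vs j./2) (size vs).*2.

Lemma toG_mem t0 vs es u : mcycle endsE vs es -> u \in toG t0 vs es ->
  u \in vs \/ exists2 f, f \in es & u = val f.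
Proof.
move=> mc; have mc' := mc; case: mc' => [Hpos Hsz Hu Hue Hj].
rewrite /toG /mkseq => /mapP [j]; rewrite mem_iota add0n => /andP [_ jlt] ->.
have jl : j./2 < size vs by rewrite ltn_half_double.
case: (odd j).
  right; have : nth t0 (map val es) j./2 \in map val es by apply: mem_nth; rewrite size_map Hsz.
  by move/mapP => [f fes ->]; exists f.
by left; apply: mem_nth.
Qed.

Lemma toG_cycle t0 vs es : mcycle endsE vs es -> is_cycle e [set: T] (toG t0 vs es).
Proof.
move=> mc; have mc' := mc; case: mc' => [Hpos Hsz Hu Hue Hj].
have k2 := mc_size2 mc.
set k := size vs in k2 Hpos Hsz Hj *.
have decomp : forall j, exists i, j = i.*2 \/ j = i.*2.+1.
  move=> j; exists j./2; have := odd_double_half j; case: (odd j) => E; [right|left]; by rewrite -{1}E ?add1n ?add0n.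
have g_even : forall i, (if odd i.*2 then nth t0 (map val es) (i.*2)./2 else nth t0 vs (i.*2)./2) = nth t0 vs i.
  by move=> i; rewrite odd_double doubleK.
have g_odd : forall i, (if odd i.*2.+1 then nth t0 (map val es) (i.*2.+1)./2 else nth t0 vs (i.*2.+1)./2) = nth t0 (map val es) i.
  by move=> i; rewrite /= odd_double /= uphalf_double.
have esZ : forall i, i < k -> nth t0 (map val es) i \notin Z.
  move=> i ilt; have [f [_ <- _]] := mc_key t0 mc ilt.
  by apply: BB_notZ; apply: valB.
split.
- by rewrite /toG size_mkseq -addnn; lia.
- apply/mkseq_uniqP => j1 j2; rewrite !inE.
  have [i1 [] ->] := decomp j1; have [i2 [] ->] := decomp j2; rewrite ?g_even ?g_odd => j1lt j2lt.
  + have i1lt := dbl_lt j1lt; have i2lt := dbl_lt j2lt.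
    by move/eqP; rewrite nth_uniq // => /eqP ->.
  + have i1lt := dbl_lt j1lt; have i2lt := dbl_lt1 j2lt.
    move=> E; have := esZ i2 i2lt; rewrite -E.
    by rewrite (mc_Z mc (mem_nth t0 i1lt)).
  + have i1lt := dbl_lt1 j1lt; have i2lt := dbl_lt j2lt.
    move=> E; have := esZ i1 i1lt; rewrite E.
    by rewrite (mc_Z mc (mem_nth t0 i2lt)).
  + have i1lt := dbl_lt1 j1lt; have i2lt := dbl_lt1 j2lt.
    have U : uniq (map val es) by rewrite (map_inj_uniq val_inj).
    by move/eqP; rewrite nth_uniq ?size_map ?Hsz // => /eqP ->.
- by move=> x; rewrite inE.
- apply: (@cycle_nth _ _ _ t0); first by rewrite /toG size_mkseq -addnn; lia.
  rewrite /toG size_mkseq => j jlt.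
  have [i [] Ej] := decomp j; rewrite Ej in jlt *.
  + have ilt := dbl_lt jlt.
    have [f [_ vf J]] := mc_key t0 mc ilt.
    have [_ _ h3 _ _] := joinsE J.
    rewrite modn_small ?(dbl_S ilt) // nth_mkseq // nth_mkseq ?(dbl_S ilt) // g_even g_odd.
    by rewrite -vf esy.
  + have ilt := dbl_lt1 jlt.
    have [f [_ vf J]] := mc_key t0 mc ilt.
    have [_ _ _ h4 _] := joinsE J.
    rewrite nth_mkseq // g_odd -vf -doubleS.
    move: ilt; rewrite leq_eqVlt => /orP [/eqP Ei|ilt'].
      rewrite Ei modnn nth_mkseq ?g_even; last by rewrite double_gt0.
      by move: h4; rewrite -Ei modnn.
    rewrite modn_small ?ltn_double // nth_mkseq ?ltn_double // g_even.
    by move: h4; rewrite modn_small.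
Qed.

Lemma part (phi : nat -> nat) (hphi : erdos_posa_bound phi) (s : nat)
  (hsO : sO_free e s [set: T]) :
  exists Xc : {set T}, [/\ Xc \subset Z, #|Xc| <= phi s &
    forall X : {set T}, Xc \subset X -> #|[set b in Bc | [forall x in X, ~~ e x b]]| <= #|Z|].
Proof.
have noC : ~ (exists C : 'I_s -> seq T * seq Esig,
          (forall i, mcycle endsE (C i).1 (C i).2) /\
          (forall i j, i != j -> forall v, v \in (C i).1 -> v \notin (C j).1)).
  move=> [C [Cc Cd]]; apply: hsO.
  case: s C Cc Cd => [|s'] C Cc Cd.
    by exists (fun _ => [::]); split; case.
  have [t0 _] : exists t0 : T, true.
    have := Cc ord0; case: (C ord0) => vs es [Hpos _ _ _ _].
    by case: vs Hpos => [//| t _ _]; exists t.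
  exists (fun i => toG t0 (C i).1 (C i).2); split.
    by move=> i; apply: toG_cycle.
  move=> i j ij u w hu hw.
  have Cdi := Cd i j ij; have Cdj := Cd j i (ltac:(by rewrite eq_sym)).
  case: (toG_mem (Cc i) hu) => [uv | [f fes ->]]; case: (toG_mem (Cc j) hw) => [wv | [f' fes' ->]].
  - split.
      by apply/eqP => E; move: (Cdi u uv); rewrite E wv.
    by apply: Zst; [apply: (mc_Z (Cc i)) | apply: (mc_Z (Cc j))].
  - split.
      apply/eqP => E; move: (mc_Z (Cc i) uv); rewrite E.
      by move: (BB_notZ (valB f')) => /negbTE ->.
    apply/negP => euw.
    have := mc_nbr (Cc j) fes' (mc_Z (Cc i) uv) (ltac:(by rewrite esy)).
    by move: (Cdi u uv) => /negbTE ->.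
  - split.
      apply/eqP => E; move: (mc_Z (Cc j) wv); rewrite -E.
      by move: (BB_notZ (valB f)) => /negbTE ->.
    apply/negP => euw.
    have := mc_nbr (Cc i) fes (mc_Z (Cc j) wv) euw.
    by move: (Cdj w wv) => /negbTE ->.
  - split; last by apply: Bcst; apply: valP.
    apply/eqP => /val_inj E; rewrite -E in fes'.
    have [h1 _ h3 _ _] := ends2_props (valB f).
    have := mc_nbr (Cc i) fes h1 h3.
    have := mc_nbr (Cc j) fes' h1 h3.
    by move=> hj hi; move: (Cdi _ hi); rewrite hj.
have [X0 [X0card X0hit]] := hphi s T Esig endsE noC.
exists (X0 :&: Z); split.
- exact: subsetIr.
- by apply: leq_trans X0card; apply: subset_leq_card; apply: subsetIl.
move=> X sub.
pose F := [set f : Esig | [forall x in X, ~~ e x (val f)]].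
have le1 : #|[set b in Bc | [forall x in X, ~~ e x b]]| <= #|F|.
  apply: leq_trans (leq_imset_card val F); apply: subset_leq_card.
  apply/subsetP => b; rewrite inE => /andP [bBc hb].
  apply/imsetP; exists (exist _ b bBc) => //; by rewrite inE.
apply: (leq_trans le1).
have le2 : #|F| <= #|Z :\: X|.
  apply: (@forest_bound _ _ endsE #|Z :\: X|) => //.
    move=> f; rewrite inE => /forall_inP hf.
    have [h1 h2 h3 h4 _] := ends2_props (valB f).
    rewrite /endsE !inE h1 h2 !andbT.
    apply/andP; split; apply/negP => hx; have := hf _ hx; by rewrite esy ?h3 ?h4.
  move=> vs es mc allF.
  have /hasP [v vvs vX0] := X0hit vs es mc.
  have vZ := mc_Z mc vvs.
  have vX : v \in X by apply: (subsetP sub); rewrite inE vX0 vZ.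
  move: vvs => /(nthP v) [i ilt vE].
  have [f [fes _ J]] := mc_key v mc ilt.
  have [_ _ h3 _ _] := joinsE J.
  have := allP allF f fes; rewrite /= inE => /forall_inP /(_ v vX).
  by rewrite esy -vE h3.
apply: (leq_trans le2); apply: subset_leq_card; exact: subsetDl.
Qed.
End Main.

Lemma explode_eq (T : finType) (e : rel T) (l : seq T) : forall W Z : {set T},
  foldl (explode1 e) (W, Z) l =
  ([set u in W | (u \notin l) && ((u \in Z) || ~~ has (fun x => e x u) l)],
   [set u in Z | u \notin l]).
Proof.
elim: l => [|v l IH] W Z /=.
  by congr pair; apply/setP => u; rewrite inE ?orbT ?andbT.
rewrite IH; congr pair; apply/setP => u; rewrite !inE.
  by case: (u == v); case: (u \in W); case: (u \in Z); case: (u \in l); case: (e v u); case: (has _ l).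
by case: (u == v); case: (u \in Z); case: (u \in l).
Qed.

Unset Implicit Arguments.
Theorem mainTheorem14 (phi : nat -> nat) (hphi : erdos_posa_bound phi)
  (s : nat) (hs : 1 <= s) (T : finType) (e : rel T) (hG : simple_graph e)
  (Z : {set T}) (hP : plantation e s [set: T] Z) (hD : dyadic e [set: T] Z) :
  exists X : {set T},
    [/\ X \subset Z, #|X| <= 2 * phi s &
        let: (W', Z') := explode e [set: T] Z X in
        [/\ plantation e s W' Z', dyadic e W' Z' &
            #|binary_vertices e W' Z'| <= 2 * #|Z|]].
Proof.
move: hG => [esy eirr]; move: (hP) => [Zsub hsO hhit]; move: (hD) => [Zst Zdeg].
pose B := BB e Z.
have acyc : forall c, is_cycle e B c -> False.
  move=> c [h1 h2 h3 h4].
  have /hasP [v vc vZ] : has (fun v => v \in Z) c by apply: hhit; split=> // x; rewrite inE.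
  by move: (BB_notZ (h3 v vc)); rewrite vZ.
have [col Hcol] := colour esy eirr (leqnn #|B|) acyc.
pose B1 := [set b in B | col b]; pose B2 := [set b in B | ~~ col b].
have B1B : B1 \subset BB e Z by apply/subsetP => b /setIdP [].
have B2B : B2 \subset BB e Z by apply/subsetP => b /setIdP [].
have B1st : forall u v, u \in B1 -> v \in B1 -> ~~ e u v.
  move=> u v /setIdP [uB cu] /setIdP [vB cv]; apply/negP => euv.
  by move: (Hcol u v uB vB euv); rewrite cu cv.
have B2st : forall u v, u \in B2 -> v \in B2 -> ~~ e u v.
  move=> u v /setIdP [uB cu] /setIdP [vB cv]; apply/negP => euv.
  by move: (Hcol u v uB vB euv); rewrite (negbTE cu) (negbTE cv).
have [X1 [X1Z X1c X1b]] := part esy Zst B1B B1st hphi hsO.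
have [X2 [X2Z X2c X2b]] := part esy Zst B2B B2st hphi hsO.
exists (X1 :|: X2); split.
- by rewrite subUset X1Z X2Z.
- apply: leq_trans (leq_card_setU X1 X2) _; by rewrite mul2n -addnn leq_add.
rewrite /explode explode_eq.
set X := X1 :|: X2.
set W' := [set u in [set: T] | _]; set Z' := [set u in Z | _].
have W'P : forall u, u \in W' -> (u \notin X) && ((u \in Z) || [forall x in X, ~~ e x u]).
  move=> u; rewrite inE in_setT /= mem_enum => /andP [-> /orP [->//|hn]].
  apply/orP; right; apply/forall_inP => x xX; apply/negP => exu.
  by move/negP: hn; apply; apply/hasP; exists x; rewrite ?mem_enum.
have Z'P : forall u, (u \in Z') = (u \in Z) && (u \notin X).
  by move=> u; rewrite inE mem_enum.
have W'notZ : forall u, u \in W' -> u \notin Z' -> u \notin Z.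
  move=> u /W'P /andP [uX _]; rewrite Z'P uX andbT; done.
have Z'W' : Z' \subset W'.
  apply/subsetP => u; rewrite Z'P => /andP [uZ uX]; by rewrite inE in_setT mem_enum uX uZ.
have cycW : forall c, is_cycle e W' c -> is_cycle e [set: T] c.
  by move=> c [h1 h2 h3 h4]; split=> // x; rewrite inE.
split.
- split=> //.
  + move=> [C [HC1 HC2]]; apply: hsO; exists C; split=> // i; exact: cycW.
  + move=> c hc; have /hasP [v vc vZ] := hhit c (cycW c hc).
    have [h1 h2 h3 h4] := hc.
    apply/hasP; exists v => //; rewrite Z'P vZ /=.
    by case/andP: (W'P v (h3 v vc)).
- split.
    move=> u v; rewrite !Z'P => /andP [uZ _] /andP [vZ _]; exact: Zst.
  move=> v; rewrite inE => /andP [vZ' vW'].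
  have vnZ := W'notZ v vW' vZ'.
  apply: leq_trans (Zdeg v (ltac:(by rewrite inE vnZ in_setT))).
  apply: subset_leq_card; apply/subsetP => u /setIdP [uZ' ebu].
  apply/setIdP; split=> //; by move: uZ'; rewrite Z'P => /andP [].
have sub : binary_vertices e W' Z' \subset
    [set b in B1 | [forall x in X, ~~ e x b]] :|: [set b in B2 | [forall x in X, ~~ e x b]].
  apply/subsetP => b; rewrite inE => /andP [] /[dup] bD; rewrite inE => /andP [bZ' bW'] c2.
  have bnZ := W'notZ b bW' bZ'.
  have /andP [bX /orP [|hb]] := W'P b bW'; first by rewrite (negbTE bnZ).
  have EN : nbrs_in e Z' b = nbrs_in e Z b.
    apply/setP => z; apply/setIdP/setIdP => [[zZ' ebz]|[zZ ebz]]; split => //.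
      by move: zZ'; rewrite Z'P => /andP [].
    rewrite Z'P zZ /=; apply/negP => zX; move/forall_inP: hb => /(_ z zX); by rewrite esy ebz.
  have bB : b \in B.
    rewrite /B /BB /binary_vertices; apply/setIdP; split; [by rewrite !inE bnZ | by rewrite -EN].
  case cb: (col b); apply/setUP; [left|right]; apply/setIdP; split=> //;
    apply/setIdP; split=> //; by rewrite cb.
apply: leq_trans (subset_leq_card sub) _.
apply: leq_trans (leq_card_setU _ _) _.
rewrite mul2n -addnn; apply: leq_add.
  by apply: X1b; apply: subsetUl.
by apply: X2b; apply: subsetUr.
Qed.
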